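(* Let $n\ge 2$ be an integer and let $c,\Delta x,\alpha,q_1,q_2,r,\sigma_m,\sigma_d>0$. Define $$\Pi_1=\frac{\alpha^2}{\Delta x^2},\quad \Pi_2=\frac{c^2q_1^2}{q_2^2\Delta x^2},\quad \Pi_3=\frac{\Delta x^2 r}{c^2q_1},\quad \Pi_4=\frac{\Delta x^2\sigma_d}{c^2\sigma_m}.$$ Let $\mathbb{D}^2$ be the $n\times n$ circulant matrix with first row $(-2,1,0,\ldots,0,1)$, $A=\begin{bmatrix}0&I\\ \mathbb{D}^2&0\end{bmatrix}$, $B=\begin{bmatrix}0\\ I\end{bmatrix}$, $C=\begin{bmatrix}\Pi_4 I&0\end{bmatrix}$. Let $K=\begin{bmatrix}K_1&K_2\end{bmatrix}$ ($K_1,K_2\in\mathbb{R}^{n\times n}$) be the optimal LQR gain for the problem of minimizing $\int_0^\infty \boldsymbol{\Phi}^T\begin{bmatrix}I-\Pi_1\mathbb{D}^2&0\\0&\Pi_2I\end{bmatrix}\boldsymbol{\Phi}+\Pi_3^{-2}\boldsymbol{\omega}^T\boldsymbol{\omega}\,d\tau$ subject to $\frac{d}{d\tau}\boldsymbol{\Phi}=A\boldsymbol{\Phi}+B\boldsymbol{\omega}$, and let $L=\begin{bmatrix}L_1\\ L_2\end{bmatrix}$ ($L_1,L_2\in\mathbb{R}^{n\times n}$) be the optimal Kalman filter gain for the system $\frac{d}{d\tau}\boldsymbol{\Psi}=A\boldsymbol{\Psi}+B\boldsymbol{\rho}$, $\boldsymbol{\gamma}=C\boldsymbol{\Psi}+\boldsymbol{\eta}$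 with cost $\int_0^\infty\boldsymbol{\eta}^T(I-\Pi_1\mathbb{D}^2)\boldsymbol{\eta}+\boldsymbol{\rho}^T\boldsymbol{\rho}\,d\tau$. The corresponding (nondimensional, discretized) LQG controller is $\frac{d}{d\tau}\tilde{\boldsymbol{\Phi}}=(A-LC)\tilde{\boldsymbol{\Phi}}+B\boldsymbol{\omega}+L\boldsymbol{\gamma}$, $\boldsymbol{\omega}=-K\tilde{\boldsymbol{\Phi}}$. If $q_1=\sigma_m$, $r=\sigma_d$, and $\Pi_1=\frac{2}{\Pi_4}$, then this LQG controller is completely decentralized, i.e. $K_1,K_2,L_1,L_2$ are all diagonal matrices.
   Context: This is the spatial discretization (with $n$ equispaced points, spacing $\Delta x$, periodic boundary conditions) and nondimensionalization of the LQG problem for the wave equation $\partial_t^2p=c^2\partial_x^2p+u+d$, $y=p+m$ on a circle, with LQR cost weights $1/q_1^2$ (on $p$ in a Sobolev-type norm with parameter $\alpha$), $1/q_2^2$ (on $\partial_tp$), $1/r^2$ (on $u$), and Kalman filter cost weights $1/\sigma_m^2$ (on $m$, Sobolev-type norm with parameter $\alpha$), $1/\sigma_d^2$ (on $d$). The optimal LQR gain for cost $\int\boldsymbol{\Phi}^TQ\boldsymbol{\Phi}+\boldsymbol{\omega}^TR\boldsymbol{\omega}$ is $K=R^{-1}B^TP$ with $P$ the symmetric positive definite stabilizing solution of $PA+A^TP-PBR^{-1}B^TP+Q=0$; the optimal Kalman gain for cost $\int\boldsymbol{\eta}^TW\boldsymbol{\eta}+\boldsymbol{\rho}^T\boldsymbol{\rho}$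 is $L=SC^TW$ with $S$ the symmetric positive definite stabilizing solution of $AS+SA^T+BB^T-SC^TWCS=0$. Gains are called completely decentralized when their $n\times n$ blocks are diagonal (so computation at spatial location $i$ needs only data at location $i$). *)

(* Defs.v *)
From HB Require Import structures.
From mathcomp Require Import all_boot all_order all_algebra.
From mathcomp Require Import complex.
From mathcomp Require Import reals.
Set Implicit Arguments. Unset Strict Implicit. Unset Printing Implicit Defensive.
Import Order.TTheory GRing.Theory Num.Theory.
Local Open Scope ring_scope.

Section WaveLQG.
Variable R : realType.

Definition D2 (n : nat) : 'M[R]_n :=
  \matrix_(i < n, j < n)
    ((((i.+1 %% n)%N == j) %:R) + (((j.+1 %% n)%N == i) %:R) - 2 * ((i == j)%:R)).

Definition Amat (n : nat) : 'M[R]_(n + n) := block_mx 0 1%:M (D2 n) 0.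
Definition Bmat (n : nat) : 'M[R]_(n + n, n) := col_mx 0 1%:M.
Definition Cmat (n : nat) (Pi4 : R) : 'M[R]_(n, n + n) := row_mx (Pi4%:M) 0.

Definition hurwitz (m : nat) (M : 'M[R]_m) : Prop :=
  forall (lam : R[i]) (v : 'cV[R[i]]_m),
    v != 0 -> map_mx (fun x => x%:C%C) M *m v = lam *: v -> complex.Re lam < 0.

Definition pos_def (m : nat) (P : 'M[R]_m) : Prop :=
  P^T = P /\ forall x : 'cV[R]_m, x != 0 -> 0 < (x^T *m P *m x) 0 0.

Definition lqr_are_sol (m k : nat) (A : 'M[R]_m) (B : 'M[R]_(m, k))
  (Q : 'M[R]_m) (Rw : 'M[R]_k) (P : 'M[R]_m) : Prop :=
  [/\ pos_def P,
      P *m A + A^T *m P - P *m B *m invmx Rw *m B^T *m P + Q = 0 &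
      hurwitz (A - B *m invmx Rw *m B^T *m P)].

Definition lqr_gain (m k : nat) (B : 'M[R]_(m, k)) (Rw : 'M[R]_k) (P : 'M[R]_m)
  : 'M[R]_(k, m) := invmx Rw *m B^T *m P.

Definition kalman_are_sol (m k p : nat) (A : 'M[R]_m) (B : 'M[R]_(m, k))
  (C : 'M[R]_(p, m)) (W : 'M[R]_p) (S : 'M[R]_m) : Prop :=
  [/\ pos_def S,
      A *m S + S *m A^T + B *m B^T - S *m C^T *m W *m C *m S = 0 &
      hurwitz (A - S *m C^T *m W *m C)].

Definition kalman_gain (m p : nat) (C : 'M[R]_(p, m)) (W : 'M[R]_p) (S : 'M[R]_m)
  : 'M[R]_(m, p) := S *m C^T *m W.

Definition diagonal (n : nat) (M : 'M[R]_n) : Prop :=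
  forall i j : 'I_n, i != j -> M i j = 0.

End WaveLQG.

(* Main.v *)
Require Import Defs.
From HB Require Import structures.
From mathcomp Require Import all_boot all_order all_algebra.
From mathcomp Require Import complex.
From mathcomp Require Import reals.
From mathcomp Require Import ring lra.
Set Implicit Arguments. Unset Strict Implicit. Unset Printing Implicit Defensive.
Import Order.TTheory GRing.Theory Num.Theory.
Local Open Scope ring_scope.

Section D.
Variable R : realType.

Definition Sh n : 'M[R]_n := \matrix_(i < n, j < n) (((i.+1 %% n)%N == j)%:R).
Definition Eh n : 'M[R]_n := 1%:M - Sh n.

Lemma ShT n : Sh n *m (Sh n)^T = 1%:M.
Proof.
apply/matrixP => i j; rewrite !mxE.
have n0 : (0 < n)%N by case: n i {j} => [[]|].
have [k hk] : {k : 'I_n | nat_of_ord k = (i.+1 %% n)%N} := exist _ (Ordinal (ltn_pmod i.+1 n0)) erefl.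
rewrite (bigD1 k) // !mxE hk eqxx mul1r.
rewrite big1 /=; last first.
  move=> l kl; rewrite !mxE.
  have -> : ((i.+1 %% n)%N == l) = false.
    by apply/negbTE; move: kl; rewrite -val_eqE /= hk eq_sym.
  by rewrite -[false%:R]/(0 : R) mul0r.
have e : ((j.+1 %% n)%N == (i.+1 %% n)%N) = (i == j).
  by rewrite -[j.+1]addn1 -[i.+1]addn1 eqn_modDr !modn_small ?ltn_ord // eq_sym.
by rewrite e addr0.
Qed.

Lemma D2E n : D2 R n = - (Eh n *m (Eh n)^T).
Proof.
rewrite /Eh linearB /= trmx1 mulmxBl !mulmxBr !mul1mx mulmx1 ShT.
apply/matrixP => i j; rewrite !mxE.
move: ((i.+1 %% n)%N == j)%:R ((j.+1 %% n)%N == i)%:R (i == j)%:R => a b c.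
by rewrite mulr2n !opprB; ring.
Qed.

Local Notation C := (R[i]).
Definition cj m n (v : 'M[C]_(m, n)) := map_mx (@conjc R) v.
Definition qf n (v : 'rV[C]_n) : C := (v *m (cj v)^T) 0 0.

Lemma qf_ge0 n (v : 'rV[C]_n) : 0 <= qf v.
Proof.
rewrite /qf mxE; apply: sumr_ge0 => i _; rewrite !mxE; exact: mulcJ_ge0.
Qed.

Lemma qf_gt0 n (v : 'rV[C]_n) : v != 0 -> 0 < qf v.
Proof.
move=> v0; rewrite lt_def qf_ge0 andbT; apply: contraNN v0 => /eqP.
rewrite /qf mxE => /psumr_eq0P h; apply/eqP/matrixP => i j.
have {}h : forall k, true -> v 0 k * (cj v)^T k 0 = 0.
  by apply: h => k _; rewrite !mxE; exact: mulcJ_ge0.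
rewrite ord1 mxE; have := h j isT; rewrite !mxE => /eqP.
by rewrite mulf_eq0 conjc_eq0 orbb => /eqP ->.
Qed.

Lemma negD n (w : 'rV[C]_n) (mu : C) : w != 0 ->
  w *m map_mx (fun x => x%:C%C) (D2 R n) = mu *: w ->
  complex.Im mu = 0 /\ complex.Re mu <= 0.
Proof.
move=> w0 hw.
set Ec := map_mx (fun x => x%:C%C) (Eh n).
have hD : map_mx (fun x => x%:C%C) (D2 R n) = - (Ec *m Ec^T).
  by rewrite D2E map_mxN map_mxM map_trmx.
have cjE : cj Ec = Ec by apply/matrixP => i j; rewrite !mxE; exact: conjc_real.
have cjM : cj (w *m Ec) = cj w *m Ec by rewrite /cj map_mxM -/(cj Ec) cjE.
have key : mu * qf w = - qf (w *m Ec).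
  have : (w *m map_mx (fun x => x%:C%C) (D2 R n) *m (cj w)^T) 0 0 = mu * qf w.
    by rewrite hw -scalemxAl mxE.
  move=> <-; rewrite hD /qf cjM trmx_mul mulmxN mulNmx mxE !mulmxA.
  by rewrite mxE.
have : mu * qf w <= 0 by rewrite key oppr_le0 qf_ge0.
rewrite pmulr_lle0 ?qf_gt0 // lecE => /andP [/eqP h1 h2]; split => //.
Qed.

Lemma quad (lam : C) (a b : R) : 0 < a -> 0 < b ->
  complex.Im (lam * (lam + b%:C%C) + a%:C%C) = 0 ->
  complex.Re (lam * (lam + b%:C%C) + a%:C%C) <= 0 -> complex.Re lam < 0.
Proof.
case: lam => x y /= ha hb.
move=> hi hr.
have : y * (2 * x + b) = 0 by rewrite -hi; ring.
move/eqP; rewrite mulf_eq0 => /orP [/eqP y0|/eqP h2].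
  rewrite y0 in hr; nra.
nra.
Qed.

Definition rhur m (G : 'M[C]_m) := forall (a : C) (v : 'rV[C]_m),
  v != 0 -> v *m G = a *: v -> complex.Re a < 0.

Lemma hurN1 n (a b : R) : 0 < a -> 0 < b ->
  rhur (map_mx (fun x => x%:C%C) (block_mx 0 1%:M (D2 R n - a%:M) (- b)%:M)).
Proof.
move=> ha hb lam v v0 hv.
rewrite map_block_mx map_mx0 map_mx1 map_mxB !map_scalar_mx in hv.
move: hv v0; rewrite -(hsubmxK v); set u := lsubmx v; set w := rsubmx v.
rewrite mul_row_block scale_row_mx => /eq_row_mx [h1 h2] v0.
rewrite mulmx0 add0r in h1; rewrite mulmx1 in h2.
have hu : u = (lam + b%:C%C) *: w.
  by rewrite scalerDl -h2 mul_mx_scalar raddfN /= scaleNr addrNK.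
have w0 : w != 0.
  by apply: contraNneq v0 => w0; rewrite hu w0 scaler0 row_mx0.
move: h1; rewrite hu mulmxBr mul_mx_scalar scalerA => /eqP.
rewrite subr_eq => /eqP h1.
have [hi hr] := negD w0 (etrans h1 (esym (scalerDl _ _ _))).
exact: (quad ha hb hi hr).
Qed.

Lemma hurN2 n (a b : R) : 0 < a -> 0 < b ->
  rhur (map_mx (fun x => x%:C%C) (block_mx (- b)%:M 1%:M (D2 R n - a%:M) 0)).
Proof.
move=> ha hb lam v v0 hv.
rewrite map_block_mx map_mx0 map_mx1 map_mxB !map_scalar_mx in hv.
move: hv v0; rewrite -(hsubmxK v); set u := lsubmx v; set w := rsubmx v.
rewrite mul_row_block scale_row_mx => /eq_row_mx [h1 h2] v0.
rewrite mulmx0 addr0 mulmx1 in h2.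
have w0 : w != 0.
  by apply: contraNneq v0 => w0; rewrite h2 w0 scaler0 row_mx0.
move: h1; rewrite h2 mulmxBr !mul_mx_scalar raddfN /= scalerA => h1.
have e : w *m map_mx (real_complex R) (D2 R n) =
    (lam * lam) *: w + b%:C%C *: (lam *: w) + a%:C%C *: w.
  by rewrite -h1 scaleNr [_ + b%:C%C *: _]addrC addNKr subrK.
have [|hi hr] := @negD n w (lam * (lam + b%:C%C) + a%:C%C) w0.
  by rewrite e scalerA -!scalerDl; congr (_ *: _); congr (_ + _); exact: mulrC.
exact: (quad ha hb hi hr).
Qed.



Lemma ReN (z : C) : complex.Re (- z) = - complex.Re z.
Proof. by case: z. Qed.

Lemma sylv m (U V X : 'M[C]_m) : rhur U -> rhur V -> U *m X + X *m V = 0 -> X = 0.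
Proof.
case: m U V X => [|m] U V X hU hV hX; first by apply/matrixP=> [[]].
have UX : U *m X = X *m - V.
  by rewrite mulmxN; apply/eqP; rewrite -subr_eq0 opprK hX.
have comm p : horner_mx U p *m X = X *m horner_mx (- V) p.
  elim/poly_ind: p => [|p c IH]; first by rewrite !rmorph0 mul0mx mulmx0.
  rewrite !rmorphD !rmorphM /= !horner_mx_X !horner_mx_C -!mulmxE.
  by rewrite !mulmxDl !mulmxDr -mulmxA UX mulmxA IH -!mulmxA scalar_mxC.
have := comm (char_poly (- V)); rewrite Cayley_Hamilton mulmx0.
have [r hr] := closed_field_poly_normal (char_poly (- V)).
have hroot z : z \in r -> complex.Re z > 0.
  move=> zr; have : eigenvalue (- V) z.
    by rewrite eigenvalue_root_char hr (monicP (char_poly_monic _)) scale1r root_prod_XsubC.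
  case/eigenvalueP => v hv v0.
  have := hV (- z) v v0; rewrite ReN oppr_lt0; apply.
  by rewrite scaleNr -hv mulmxN opprK.
rewrite hr (monicP (char_poly_monic _)) scale1r rmorph_prod.
have : \prod_(z <- r) horner_mx U ('X - z%:P) \in unitmx.
  elim: r hroot {hr} => [|z r IH] hroot; first by rewrite big_nil unitmx1.
  rewrite big_cons -mulmxE unitmx_mul IH ?andbT; last by move=> w wr; apply: hroot; rewrite inE wr orbT.
  rewrite rmorphB /= horner_mx_X horner_mx_C unitmxE unitfE.
  apply/negP => /det0P [v v0 hv].
  have := hU z v v0; rewrite ltNge ltW ?hroot ?inE ?eqxx //.
  have : v *m U = z *: v by apply/eqP; rewrite -subr_eq0 -mul_mx_scalar -mulmxBr hv.
  by move=> -> /(_ erefl).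
by move=> hu hP; rewrite -(mulKmx hu X) hP mulmx0.
Qed.

Lemma hur_rhur m (M : 'M[R]_m) : hurwitz M -> rhur (map_mx (fun x => x%:C%C) M)^T.
Proof.
move=> h a v v0 hv; apply: (h a v^T); first by rewrite trmx_eq0.
by rewrite -[map_mx _ M]trmxK -trmx_mul hv linearZ.
Qed.

Lemma D2T n : (D2 R n)^T = D2 R n.
Proof. by rewrite D2E linearN /= trmx_mul trmxK. Qed.

Lemma are_diff m (A G P P2 Q : 'M[R]_m) : P^T = P -> G^T = G ->
  (A - G *m P)^T *m (P - P2) + (P - P2) *m (A - G *m P2) =
  (P *m A + A^T *m P - P *m G *m P + Q) - (P2 *m A + A^T *m P2 - P2 *m G *m P2 + Q).
Proof.
move=> hP hG; rewrite [(A - _)^T]linearB /= trmx_mul hP hG.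
rewrite !mulmxBl !mulmxBr !mulmxA.
move: (A^T *m P) (A^T *m P2) (P *m G *m P) (P *m G *m P2) (P *m A) (P2 *m A)
  (P2 *m G *m P) (P2 *m G *m P2) Q => a b c d e f g h q.
apply/matrixP => i j; rewrite !mxE; ring.
Qed.

Lemma kal_diff m (A H S S2 BB : 'M[R]_m) : S^T = S -> H^T = H ->
  (A - S2 *m H) *m (S - S2) + (S - S2) *m (A - S *m H)^T =
  (A *m S + S *m A^T + BB - S *m H *m S) - (A *m S2 + S2 *m A^T + BB - S2 *m H *m S2).
Proof.
move=> hS hH; rewrite [(A - _)^T]linearB /= trmx_mul hS hH.
rewrite !mulmxBl !mulmxBr !mulmxA.
move: (A *m S) (A *m S2) (S2 *m H *m S) (S2 *m H *m S2) (S *m A^T) (S2 *m A^T)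
  (S *m H *m S) BB => a b c d e f g q.
apply/matrixP => i j; rewrite !mxE; ring.
Qed.

Lemma lqr_sol n (Pi1 Pi2 g y z : R) : y != 0 ->
  Pi1 = 2 * y -> g = (y ^+ 2)^-1 -> Pi2 = g * z ^+ 2 - 2 * y ->
  let P2 := block_mx ((z * g * y)%:M - z *: D2 R n) (y%:M) (y%:M) (z%:M) in
  let G := block_mx 0 0 0 (g%:M) : 'M_(n + n) in
  let Q := block_mx (1%:M - Pi1 *: D2 R n) 0 0 (Pi2%:M) in
  P2 *m Amat R n + (Amat R n)^T *m P2 - P2 *m G *m P2 + Q = 0
  /\ Amat R n - G *m P2 = block_mx 0 1%:M (D2 R n - (g * y)%:M) (- (g * z))%:M.
Proof.
move=> y0 h1 h2 h3 P2 G Q; subst Pi1 Pi2 g; rewrite /P2 /G /Q /Amat tr_block_mx !trmx0 trmx1 D2T.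
rewrite !mulmx_block !mul0mx !mulmx0 !mul1mx !mulmx1 !mul_mx_scalar !mul_scalar_mx.
rewrite !opp_block_mx !add_block_mx.
rewrite ?(addr0, add0r, subr0, sub0r, scaler0, scale0r, mul0mx, mulmx0, oppr0).
move: (D2 R n) => D.
split.
  rewrite -block_mx0; congr block_mx; apply/matrixP => i j; rewrite !mxE;
  case: (i == j) => /=; rewrite ?mulr1n ?mulr0n; field => //.
by rewrite !scale_scalar_mx [y * _]mulrC [z * _]mulrC raddfN.
Qed.

Lemma kal_sol n (Pi1 Pi4 s : R) (Wi : 'M[R]_n) : s != 0 ->
  Pi1 = s ^+ 2 -> Pi4 = 2 / s ^+ 2 ->
  let W := 1%:M - Pi1 *: D2 R n in
  Wi *m W = 1%:M -> W *m Wi = 1%:M -> D2 R n *m Wi = Wi *m D2 R n ->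
  let y := s ^+ 2 / 2 in let x := s ^+ 3 / 2 in let h := Pi4 ^+ 2 in
  let S2 := block_mx (x *: Wi) (y *: Wi) (y *: Wi) ((h * x * y) *: Wi - x *: (Wi *m D2 R n)) in
  let A := Amat R n in let B := Bmat R n in let C := Cmat n Pi4 in
  S2 *m C^T *m W = col_mx ((x * Pi4)%:M) ((y * Pi4)%:M) /\
  A *m S2 + S2 *m A^T + B *m B^T - S2 *m C^T *m W *m C *m S2 = 0 /\
  A - S2 *m C^T *m W *m C = block_mx (- (h * x))%:M 1%:M (D2 R n - (h * y)%:M) 0.
Proof.
move=> s0 h1 h4 W hW1 hW2 hc y x h S2 A B C.
have hSC : S2 *m C^T *m W = col_mx ((x * Pi4)%:M) ((y * Pi4)%:M).
  rewrite /S2 /C /Cmat tr_row_mx trmx0 tr_scalar_mx mul_block_col !mulmx0 !addr0.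
  rewrite !mul_mx_scalar mul_col_mx -!scalemxAl hW1 !scalerA !scale_scalar_mx !mulr1.
  by rewrite [Pi4 * _]mulrC [Pi4 * y]mulrC.
split => //.
rewrite !hSC /C /Cmat mul_col_row !mulmx0 !mul_scalar_mx !scale_scalar_mx.
rewrite /A /B /S2 /Amat /Bmat tr_block_mx !trmx0 trmx1 D2T tr_col_mx trmx0 trmx1 mul_col_row.
rewrite !mulmx_block !mul0mx !mulmx0 !mul1mx !mulmx1 ?mul_mx_scalar ?mul_scalar_mx.
rewrite !opp_block_mx !add_block_mx.
rewrite ?(addr0, add0r, subr0, sub0r, scaler0, scale0r, mul0mx, mulmx0, oppr0).
split.
  rewrite -block_mx0; congr block_mx; rewrite -?hW1 /W ?mulmxBr ?mulmx1;
  rewrite -?scalemxAr -?scalemxAl ?hc ?scalerA ?scalerBr ?scalerA;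
  move: (Wi *m D2 R n) => V; apply/matrixP => i j; rewrite !mxE;
  by rewrite /x /y /h h4 ?h1; field.
have e1 : x * Pi4 * Pi4 = h * x by rewrite /h; ring.
have e2 : y * Pi4 * Pi4 = h * y by rewrite /h; ring.
by rewrite e1 e2 raddfN.
Qed.

Lemma W_unit n (Pi1 : R) : 0 < Pi1 -> (1%:M - Pi1 *: D2 R n) \in unitmx.
Proof.
move=> hp; rewrite unitmxE unitfE; apply/negP => /det0P [v v0 hv].
have hv' : v *m D2 R n = Pi1^-1 *: v.
  have e : v = Pi1 *: (v *m D2 R n).
    by move/eqP: hv; rewrite mulmxBr mulmx1 subr_eq0 scalemxAr => /eqP.
  have hp0 : Pi1 != 0 by rewrite gt_eqF.
  by rewrite {2}e scalerA mulVf // scale1r.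
pose w := map_mx (fun x => x%:C%C) v.
have w0 : w != 0.
  apply: contraNneq v0 => /matrixP h; apply/eqP/matrixP => i j.
  by have := h i j; rewrite !mxE => -[].
have := @negD n w (Pi1^-1)%:C%C w0.
rewrite /w -map_mxM hv' => /(_ _) [].
  by apply/matrixP => i j; rewrite !mxE rmorphM.
by move=> _ /=; rewrite leNgt invr_gt0 hp.
Qed.

Lemma W_comm n (D Wi W : 'M[R]_n) : Wi *m W = 1%:M -> W *m Wi = 1%:M ->
  D *m W = W *m D -> D *m Wi = Wi *m D.
Proof.
move=> h1 h2 hc.
by rewrite -[D *m Wi]mul1mx -h1 -mulmxA (mulmxA W) -hc -!mulmxA h2 mulmx1.
Qed.

Lemma diag_scalar n (a : R) : diagonal (a%:M : 'M[R]_n).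
Proof. by move=> i j /negbTE hij; rewrite mxE hij mulr0n. Qed.
End D.
Unset Implicit Arguments.
Set Strict Implicit.
Theorem mainTheorem4 (R : realType) (n : nat) (hn : (2 <= n)%N)
  (c dx alpha q1 q2 r sm sd : R)
  (hc : 0 < c) (hdx : 0 < dx) (halpha : 0 < alpha) (hq1 : 0 < q1) (hq2 : 0 < q2)
  (hr : 0 < r) (hsm : 0 < sm) (hsd : 0 < sd)
  (P S : 'M[R]_(n + n)) :
  let Pi1 := alpha ^+ 2 / dx ^+ 2 in
  let Pi2 := c ^+ 2 * q1 ^+ 2 / (q2 ^+ 2 * dx ^+ 2) in
  let Pi3 := dx ^+ 2 * r / (c ^+ 2 * q1) in
  let Pi4 := dx ^+ 2 * sd / (c ^+ 2 * sm) in
  let A := Amat R n in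
  let B := Bmat R n in
  let C := Cmat n Pi4 in
  let Q := block_mx (1%:M - Pi1 *: D2 R n) 0 0 (Pi2%:M) in
  let Rw := (Pi3 ^- 2)%:M : 'M[R]_n in
  let W := 1%:M - Pi1 *: D2 R n in
  lqr_are_sol A B Q Rw P ->
  kalman_are_sol A B C W S ->
  q1 = sm -> r = sd -> Pi1 = 2 / Pi4 ->
  let K := lqr_gain B Rw P in
  let L := kalman_gain C W S in
  [/\ diagonal (lsubmx K), diagonal (rsubmx K),
      diagonal (usubmx L) & diagonal (dsubmx L)].
Proof.
move=> Pi1 Pi2 Pi3 Pi4 A B C Q Rw W hP hS eq1 eq2 hPi K L.
pose f := fun x : R => x%:C%C.
have Pi4p : 0 < Pi4 by rewrite /Pi4 divr_gt0 ?mulr_gt0 ?exprn_gt0.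
have Pi2p : 0 < Pi2 by rewrite /Pi2 divr_gt0 ?mulr_gt0 ?exprn_gt0.
have Pi34 : Pi3 = Pi4 by rewrite /Pi3 /Pi4 eq1 eq2.
have Pi3p : 0 < Pi3 by rewrite Pi34.
have Pi1p : 0 < Pi1 by rewrite hPi divr_gt0.
have mapinj : forall m k (M : 'M[R]_(m, k)), map_mx f M = 0 -> M = 0.
  move=> m k M /matrixP h; apply/matrixP => i j.
  by have := h i j; rewrite !mxE => -[].
set g := Pi3 ^+ 2.
set y := Pi3^-1.
set z := Num.sqrt ((2 * y + Pi2) / g).
have gp : 0 < g by rewrite exprn_gt0.
have yp : 0 < y by rewrite invr_gt0.
have zp : 0 < z by rewrite sqrtr_gt0 divr_gt0 // addr_gt0 // mulr_gt0.
have hiR : invmx Rw = g%:M by rewrite /Rw invmx_scalar invrK.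
set G := B *m invmx Rw *m B^T.
have hG : G = block_mx 0 0 0 (g%:M).
  rewrite /G hiR /B /Bmat tr_col_mx trmx0 trmx1 mul_col_mx mul0mx mul1mx mul_col_row.
  by rewrite !mul0mx !mulmx0 mulmx1.
have e1 : Pi1 = 2 * y by rewrite hPi -Pi34 /y.
have e2 : g = (y ^+ 2)^-1 by rewrite /g /y exprVn invrK.
have e3 : Pi2 = g * z ^+ 2 - 2 * y.
  rewrite /z sqr_sqrtr; last by rewrite divr_ge0 // ?ltW // addr_gt0 // mulr_gt0.
  by rewrite mulrC divfK ?gt_eqF // addrAC subrr add0r.
have := @lqr_sol R n Pi1 Pi2 g y z (lt0r_neq0 yp) e1 e2 e3.
set P2 := block_mx _ _ _ _.
rewrite -hG -/A -/Q => -[hP2e hP2cl].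
case: hP => -[hPT _] hPe hPh.
have hPe' : P *m A + A^T *m P - P *m G *m P + Q = 0 by rewrite /G !mulmxA.
have hGT : G^T = G by rewrite hG tr_block_mx !trmx0 tr_scalar_mx.
have hPP2 : P = P2.
  have := are_diff A P2 Q hPT hGT; rewrite hPe' hP2e subrr => hd.
  apply/eqP; rewrite -subr_eq0; apply/eqP; apply: mapinj.
  apply: (@sylv R _ (map_mx f (A - G *m P))^T (map_mx f (A - G *m P2))).
  - exact: hur_rhur.
  - rewrite hP2cl; apply: hurN1; exact: mulr_gt0.
  by rewrite map_trmx -!map_mxM -map_mxD hd map_mx0.
have hK : K = row_mx ((g * y)%:M) ((g * z)%:M).
  rewrite /K /lqr_gain hPP2 hiR /B /Bmat tr_col_mx trmx0 trmx1 mul_mx_row mulmx0 mulmx1.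
  by rewrite mul_row_block !mul0mx !add0r -!scalar_mxM.
set s := Num.sqrt (2 / Pi4).
have sp : 0 < s by rewrite sqrtr_gt0 divr_gt0.
have hs2 : s ^+ 2 = 2 / Pi4 by rewrite sqr_sqrtr // divr_ge0 // ltW.
have h1 : Pi1 = s ^+ 2 by rewrite hPi hs2.
have h4 : Pi4 = 2 / s ^+ 2.
  by rewrite hs2 invf_div mulrA mulrC mulrA mulVf ?mul1r // (pnatr_eq0 R 2).
have hWu : W \in unitmx := W_unit n Pi1p.
set Wi := invmx W.
have hW1 : Wi *m W = 1%:M := mulVmx hWu.
have hW2 : W *m Wi = 1%:M := mulmxV hWu.
have hcW : D2 R n *m Wi = Wi *m D2 R n.
  apply: W_comm hW1 hW2 _.
  by rewrite /W mulmxBr mulmxBl mulmx1 mul1mx -scalemxAr -scalemxAl.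
have H0 := @kal_sol R n Pi1 Pi4 s Wi (lt0r_neq0 sp) h1 h4 hW1 hW2 hcW.
cbv zeta in H0; move: H0.
set S2 := block_mx _ _ _ _.
rewrite -/A -/B -/C -/W => -[hSC [hS2e hS2cl]].
case: hS => -[hST _] hSe hSh.
set H := C^T *m W *m C.
have hWT : W^T = W.
  by rewrite /W [(1%:M - _)^T]linearB /= trmx1 linearZ /= D2T.
have hHT : H^T = H by rewrite /H !trmx_mul trmxK hWT mulmxA.
have hSe' : A *m S + S *m A^T + B *m B^T - S *m H *m S = 0 by rewrite /H !mulmxA.
have hS2e' : A *m S2 + S2 *m A^T + B *m B^T - S2 *m H *m S2 = 0 by rewrite /H !mulmxA.
have hS2cl' : A - S2 *m H = block_mx (- (Pi4 ^+ 2 * (s ^+ 3 / 2)))%:M 1%:M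
     (D2 R n - (Pi4 ^+ 2 * (s ^+ 2 / 2))%:M) 0 by rewrite /H !mulmxA.
have hSh' : hurwitz (A - S *m H) by rewrite /H !mulmxA.
have hSS2 : S = S2.
  have := kal_diff A S2 (B *m B^T) hST hHT; rewrite hSe' hS2e' subrr => hd.
  apply/eqP; rewrite -subr_eq0; apply/eqP; apply: mapinj.
  apply: (@sylv R _ (map_mx f (A - S2 *m H)) (map_mx f (A - S *m H))^T).
  - rewrite hS2cl'; apply: hurN2; apply: mulr_gt0; first [exact: exprn_gt0 | by rewrite divr_gt0 // exprn_gt0].
  - exact: hur_rhur.
  by rewrite map_trmx -!map_mxM -map_mxD hd map_mx0.
have hL : L = col_mx ((s ^+ 3 / 2 * Pi4)%:M) ((s ^+ 2 / 2 * Pi4)%:M).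
  by rewrite /L /kalman_gain hSS2 hSC.
rewrite hK hL row_mxKl row_mxKr col_mxKu col_mxKd.
split; exact: diag_scalar.
Qed.
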